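(* Let $\gamma$ be an admissible path of length $|\gamma|$, let $n\in\mathbb N$ be such that $\theta_n=2\pi/n<|\gamma|$, let $l_n=2\sin\frac{\pi}{n}$, and let $P_n$ be the $\theta_n$-discretization of $\gamma$. Let $\mathcal U$ be the configuration at $\gamma(0)$ with direction $\gamma'(0)$ and $\mathcal V$ the configuration at $\gamma(|\gamma|)$ with direction $\gamma'(|\gamma|)$ (i.e. with vectors $l_n\gamma'(0)$ and $l_n\gamma'(|\gamma|)$). Then $P_n$ is a discrete curvature-constrained path with parameters $\theta_n$ and $l_n$ that starts at $\mathcal U$ and ends at $\mathcal V$.
   Context: An admissible path is a continuously differentiable planar curve $\gamma:[0,|\gamma|]\to\mathbb R^2$ parameterized by arclength such that for all $t<s<t+\pi$ in its domain the angle between $\gamma'(s)$ and $\gamma'(t)$ is at most $s-t$. For $0<\theta<|\gamma|$ write $|\gamma|=m\theta+\delta$ with $m=\lfloor|\gamma|/\theta\rfloor$, $0\le\delta<\theta$. The $\theta$-discretization of $\gamma$ is the polygonal path with vertices $P_i=\gamma(t_i)$, $i=0,\dots,k$, where: if $\delta=0$, then $k=m$ and $t_i=i\theta$; if $\delta>0$, then $k=m+2$, $t_0=0$, $t_1=\delta/2$, $t_i-t_{i-1}=\theta$ for $i=2,\dots,m+1$, and $t_{m+2}=|\gamma|$ (so $t_{m+2}-t_{m+1}=\delta/2$). Discrete curvature-constrained paths with parameters $\theta$ (an angle) and $\ell>0$ (a length): for a polygonal path, the turn at an internal vertex is the angle in $[0,\pi]$ between the directions of the incoming and outgoing edges; an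 edge is short if its length is $<\ell$; an edge with an adjacent edge at each end is an inflection edge if the two adjacent edges lie on opposite sides of its supporting line. The path is a discrete curvature-constrained path with parameters $\theta,\ell$ if (i) every turn is at most $\theta$; (ii) no two adjacent edges are both short; (iii) for every short non-inflection edge $ab$ with adjacent edges $a^-a$, $bb^+$, the angle between the directions of $\overrightarrow{a^-a}$ and $\overrightarrow{bb^+}$ is at most $\theta$. A configuration is a pair $(u,U)$ of a point and a vector of length $\ell$; a path with first vertex $u$ starts at $(u,U)$ if prepending the segment from $u-U$ to $u$ gives a discrete curvature-constrained path, and a path with last vertex $v$ ends at $(v,V)$ if appending the segment from $v$ to $v+V$ gives a discrete curvature-constrained path. *)

(* Defs.v *)
From Stdlib Require Import Reals Lra Lia List.
From Coquelicot Require Import Coquelicot.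
Import ListNotations.
Open Scope R_scope.

Definition pt2 := (R * R)%type.
Definition vadd (u v : pt2) : pt2 := (fst u + fst v, snd u + snd v).
Definition vsub (u v : pt2) : pt2 := (fst u - fst v, snd u - snd v).
Definition vscale (c : R) (u : pt2) : pt2 := (c * fst u, c * snd u).
Definition vdot (u v : pt2) : R := fst u * fst v + snd u * snd v.
Definition vcross (u v : pt2) : R := fst u * snd v - snd u * fst v.
Definition vnorm (u : pt2) : R := sqrt (vdot u u).

Definition vangle (u v : pt2) : R := acos (vdot u v / (vnorm u * vnorm v)).

Definition deriv_on (a b : R) (f f' : R -> R) : Prop :=
  forall t, a <= t <= b ->
    filterlim (fun s => (f s - f t) / (s - t))
      (within (fun s => a <= s <= b /\ s <> t) (locally t)) (locally (f' t)).

Definition cont_on (a b : R) (f : R -> R) : Prop :=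
  forall t, a <= t <= b ->
    filterlim f (within (fun s => a <= s <= b) (locally t)) (locally (f t)).

Definition admissible (gamma dgamma : R -> pt2) (L : R) : Prop :=
  0 < L /\
  deriv_on 0 L (fun t => fst (gamma t)) (fun t => fst (dgamma t)) /\
  deriv_on 0 L (fun t => snd (gamma t)) (fun t => snd (dgamma t)) /\
  cont_on 0 L (fun t => fst (dgamma t)) /\
  cont_on 0 L (fun t => snd (dgamma t)) /\
  (forall t, 0 <= t <= L -> vnorm (dgamma t) = 1) /\
  (* curvature constraint *)
  (forall t s, 0 <= t -> s <= L -> t < s -> s < t + PI ->
     vangle (dgamma s) (dgamma t) <= s - t).

Definition disc_times (L theta : R) : list R :=
  let m := Z.to_nat (Int_part (L / theta)) in
  let delta := L - INR m * theta in
  if Req_dec_T delta 0 then map (fun i => INR i * theta) (seq 0 (m + 1))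
  else 0 :: map (fun i => delta / 2 + INR i * theta) (seq 0 (m + 1)) ++ [L].

Definition discretization (gamma : R -> pt2) (L theta : R) : list pt2 :=
  map gamma (disc_times L theta).

(** Polygonal paths as lists of vertices p_0, ..., p_k. *)
Definition vtx (p : list pt2) (i : nat) : pt2 := nth i p (0, 0).
Definition edge (p : list pt2) (i : nat) : pt2 := vsub (vtx p (S i)) (vtx p i).
Definition short (l : R) (e : pt2) : Prop := vnorm e < l.

(** edge (S i) = p_(i+1) p_(i+2) is an inflection edge: its neighbours
    p_i and p_(i+3) lie (strictly) on opposite sides of its supporting line. *)
Definition inflection (p : list pt2) (i : nat) : Prop :=
  let a := vtx p (S i) in let b := vtx p (S (S i)) in
  vcross (vsub b a) (vsub (vtx p i) a) * vcross (vsub b a) (vsub (vtx p (3 + i)) a) < 0.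

Definition dccp (theta l : R) (p : list pt2) : Prop :=
  (* (i) turn at every internal vertex p_(i+1) is at most theta *)
  (forall i, (i + 3 <= length p)%nat -> vangle (edge p i) (edge p (S i)) <= theta) /\
  (forall i, (i + 3 <= length p)%nat -> ~ (short l (edge p i) /\ short l (edge p (S i)))) /\
  (forall i, (i + 4 <= length p)%nat -> short l (edge p (S i)) -> ~ inflection p i ->
     vangle (edge p i) (edge p (S (S i))) <= theta).

Definition starts_at (theta l : R) (p : list pt2) (u U : pt2) : Prop :=
  head p = Some u /\ dccp theta l (vsub u U :: p).

Definition ends_at (theta l : R) (p : list pt2) (v V : pt2) : Prop :=
  last p (0, 0) = v /\ p <> [] /\ dccp theta l (p ++ [vadd v V]).

(* Main.v *)
Require Import Defs.
From Stdlib Require Import Reals Lra Lia List Psatz ZArith.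
From Coquelicot Require Import Coquelicot.
Import ListNotations.
Open Scope R_scope.

Lemma vnorm_sq u : vnorm u * vnorm u = fst u * fst u + snd u * snd u.
Proof. unfold vnorm, vdot. rewrite sqrt_sqrt; nra. Qed.

Lemma vnorm_ge0 u : 0 <= vnorm u.
Proof. unfold vnorm. apply sqrt_pos. Qed.

Lemma cs u v : vdot u v <= vnorm u * vnorm v.
Proof.
  destruct u as [a b], v as [c d]. unfold vnorm, vdot; simpl.
  rewrite <- sqrt_mult by nra.
  apply Rle_trans with (Rabs (a*c+b*d)); [apply Rle_abs|].
  rewrite <- sqrt_Rsqr_abs. apply sqrt_le_1_alt. unfold Rsqr. pose proof (Rle_0_sqr (a*d-b*c)). unfold Rsqr in *. nra.
Qed.

Lemma cs_abs u v : Rabs (vdot u v) <= vnorm u * vnorm v.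
Proof.
  unfold Rabs. destruct Rcase_abs. 2: apply cs.
  replace (- vdot u v) with (vdot (vscale (-1) u) v) by (unfold vdot, vscale; simpl; ring).
  replace (vnorm u) with (vnorm (vscale (-1) u)). apply cs.
  unfold vnorm, vdot, vscale; simpl. f_equal. ring.
Qed.

Lemma acos_le x b : 0 <= b <= PI -> cos b <= x -> acos x <= b.
Proof.
  intros Hb Hx. destruct (Rle_dec 1 x) as [H1|H1].
  - unfold acos. destruct (Rle_dec x (-1)); [lra|]. destruct (Rle_dec 1 x); lra.
  - destruct (Rle_dec x (-1)) as [H2|H2].
    + assert (cos b = -1). { pose proof (COS_bound b). lra. }
      assert (b = PI). { destruct (Req_dec b PI) as [->|Hne]; auto.
        pose proof (cos_decreasing_1 b PI (proj1 Hb) (proj2 Hb) ltac:(pose PI_RGT_0; lra) (Rle_refl _)).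
        rewrite cos_PI in H0. lra. }
      pose proof (acos_bound x). lra.
    + pose proof (acos_bound x). destruct (Rle_dec (acos x) b) as [|Hc]; auto.
      assert (cos b > cos (acos x)).
      { apply cos_decreasing_1; lra. }
      rewrite cos_acos in H0; lra.
Qed.

Lemma vangle_le u v b : 0 < vnorm u -> 0 < vnorm v -> 0 <= b <= PI ->
  cos b * vnorm u * vnorm v <= vdot u v -> vangle u v <= b.
Proof.
  intros Hu Hv Hb H. unfold vangle. apply acos_le; auto.
  apply Rmult_le_reg_r with (vnorm u * vnorm v). nra.
  unfold Rdiv. rewrite Rmult_assoc, Rinv_l by nra. lra.
Qed.

Definition cone (w : pt2) (a : R) (v : pt2) := cos a * vnorm v <= vdot v w.

Lemma cone_tri w a b v1 v2 : vnorm w = 1 -> 0 <= a <= PI/2 -> 0 <= b <= PI/2 ->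
  cone w a v1 -> cone w b v2 -> cos (a+b) * vnorm v1 * vnorm v2 <= vdot v1 v2.
Proof.
  intros Hw Ha Hb H1 H2. unfold cone in *.
  pose proof (vnorm_sq w) as Ew. rewrite Hw in Ew.
  pose proof (vnorm_sq v1) as E1. pose proof (vnorm_sq v2) as E2.
  pose proof (vnorm_ge0 v1). pose proof (vnorm_ge0 v2).
  destruct w as [w1 w2], v1 as [a1 a2], v2 as [b1 b2]. unfold vdot in *; simpl in *.
  set (r1 := vnorm (a1,a2)) in *. set (r2 := vnorm (b1,b2)) in *.
  set (X1 := a1*w1+a2*w2) in *. set (X2 := b1*w1+b2*w2) in *.
  set (Y1 := a2*w1-a1*w2). set (Y2 := b2*w1-b1*w2).
  assert (D: a1*b1+a2*b2 = X1*X2+Y1*Y2).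
  { transitivity ((a1*b1+a2*b2)*(w1*w1+w2*w2)). rewrite <- Ew; ring. unfold X1,X2,Y1,Y2; ring. }
  assert (N1: r1*r1 = X1*X1+Y1*Y1).
  { rewrite E1. transitivity ((a1*a1+a2*a2)*(w1*w1+w2*w2)). rewrite <- Ew; ring. unfold X1,Y1; ring. }
  assert (N2: r2*r2 = X2*X2+Y2*Y2).
  { rewrite E2. transitivity ((b1*b1+b2*b2)*(w1*w1+w2*w2)). rewrite <- Ew; ring. unfold X2,Y2; ring. }
  rewrite cos_plus, D.
  assert (ca: 0 <= cos a) by (apply cos_ge_0; lra).
  assert (cb: 0 <= cos b) by (apply cos_ge_0; lra).
  assert (sa: 0 <= sin a) by (apply sin_ge_0; lra).
  assert (sb: 0 <= sin b) by (apply sin_ge_0; lra).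
  pose proof (sin2_cos2 a). pose proof (sin2_cos2 b). unfold Rsqr in *.
  assert (P1: (cos a*r1)*(cos a*r1) <= X1*X1) by (apply Rmult_le_compat; nra).
  assert (P2: (cos b*r2)*(cos b*r2) <= X2*X2) by (apply Rmult_le_compat; nra).
  assert (Q1: Y1*Y1 <= (sin a * r1)*(sin a * r1)).
  { replace ((sin a * r1)*(sin a * r1)) with (r1*r1*(sin a*sin a)) by ring.
    replace (sin a * sin a) with (1 - cos a * cos a) by lra. nra. }
  assert (Q2: Y2*Y2 <= (sin b * r2)*(sin b * r2)).
  { replace ((sin b * r2)*(sin b * r2)) with (r2*r2*(sin b*sin b)) by ring.
    replace (sin b * sin b) with (1 - cos b * cos b) by lra. nra. }
  assert (A1: Rabs Y1 <= sin a * r1).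
  { apply (Rsqr_le_abs_0 Y1 (sin a * r1)) in Q1. rewrite (Rabs_pos_eq (sin a * r1)) in Q1 by nra. auto. }
  assert (A2: Rabs Y2 <= sin b * r2).
  { apply (Rsqr_le_abs_0 Y2 (sin b * r2)) in Q2. rewrite (Rabs_pos_eq (sin b * r2)) in Q2 by nra. auto. }
  assert (Y1*Y2 >= - (Rabs Y1 * Rabs Y2)).
  { rewrite <- Rabs_mult. pose proof (Rle_abs (-(Y1*Y2))). rewrite Rabs_Ropp in H5. lra. }
  assert (Rabs Y1 * Rabs Y2 <= sin a * r1 * (sin b * r2)).
  { apply Rmult_le_compat; auto using Rabs_pos. }
  assert (cos a * r1 * (cos b * r2) <= X1 * X2).
  { apply Rmult_le_compat; nra. }
  nra.
Qed.

Definition D_eps (a b : R) (f f' : R -> R) := forall t, a <= t <= b -> forall eps, 0 < eps ->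
  exists d, 0 < d /\ forall s, a <= s <= b -> s <> t -> Rabs (s - t) < d ->
    Rabs ((f s - f t) / (s - t) - f' t) < eps.

Lemma ballR x e y : ball x e y <-> Rabs (y - x) < e.
Proof. reflexivity. Qed.

Lemma deriv_on_eps a b f f' : deriv_on a b f f' -> D_eps a b f f'.
Proof.
  intros H t Ht eps Heps. specialize (H t Ht).
  pose proof (proj1 (filterlim_locally _ _) H (mkposreal eps Heps)) as H1.
  destruct H1 as [d Hd]. exists d. split. apply cond_pos.
  intros s Hs Hne Hsd. specialize (Hd s). apply ballR in Hd; auto.
Qed.

Lemma D_eps_sub a b a' b' f f' : a <= a' -> b' <= b -> D_eps a b f f' -> D_eps a' b' f f'.
Proof.
  intros H1 H2 H t Ht eps He. destruct (H t ltac:(lra) eps He) as [d [Hd Hs]].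
  exists d; split; auto. intros s Hs1 Hs2 Hs3. apply Hs; auto; lra.
Qed.

Lemma D_eps_lin a b f f' g g' c1 c2 : D_eps a b f f' -> D_eps a b g g' ->
  D_eps a b (fun x => c1 * f x + c2 * g x) (fun x => c1 * f' x + c2 * g' x).
Proof.
  intros Hf Hg t Ht eps He.
  set (e' := eps / (2 * (Rabs c1 + Rabs c2 + 1))).
  assert (He' : 0 < e'). { unfold e'. pose proof (Rabs_pos c1). pose proof (Rabs_pos c2).
    apply Rdiv_lt_0_compat; lra. }
  destruct (Hf t Ht e' He') as [d1 [Hd1 H1]]. destruct (Hg t Ht e' He') as [d2 [Hd2 H2]].
  exists (Rmin d1 d2). split. apply Rmin_pos; auto.
  intros s Hs Hne Hsd.
  assert (A1 := H1 s Hs Hne ltac:(pose proof (Rmin_l d1 d2); lra)).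
  assert (A2 := H2 s Hs Hne ltac:(pose proof (Rmin_r d1 d2); lra)).
  assert (Hst : s - t <> 0) by lra.
  replace ((c1 * f s + c2 * g s - (c1 * f t + c2 * g t)) / (s - t) - (c1 * f' t + c2 * g' t))
    with (c1 * ((f s - f t) / (s - t) - f' t) + c2 * ((g s - g t) / (s - t) - g' t))
    by (field; auto).
  eapply Rle_lt_trans. apply Rabs_triang. rewrite !Rabs_mult.
  assert (Rabs c1 * Rabs ((f s - f t) / (s - t) - f' t) <= Rabs c1 * e')
    by (apply Rmult_le_compat_l; [apply Rabs_pos|lra]).
  assert (Rabs c2 * Rabs ((g s - g t) / (s - t) - g' t) <= Rabs c2 * e')
    by (apply Rmult_le_compat_l; [apply Rabs_pos|lra]).
  assert (Rabs c1 * e' + Rabs c2 * e' < eps).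
  { unfold e'. pose proof (Rabs_pos c1). pose proof (Rabs_pos c2).
    replace (Rabs c1 * (eps / (2 * (Rabs c1 + Rabs c2 + 1))) + Rabs c2 * (eps / (2 * (Rabs c1 + Rabs c2 + 1))))
      with (eps * ((Rabs c1 + Rabs c2) / (2 * (Rabs c1 + Rabs c2 + 1)))) by (field; lra).
    rewrite <- (Rmult_1_r eps) at 2. apply Rmult_lt_compat_l; auto.
    apply Rmult_lt_reg_r with (2 * (Rabs c1 + Rabs c2 + 1)). lra.
    unfold Rdiv. rewrite Rmult_assoc, Rinv_l by lra. lra. }
  lra.
Qed.

Lemma D_eps_glob a b f f' : (forall t, derivable_pt_lim f t (f' t)) -> D_eps a b f f'.
Proof.
  intros H t Ht eps He. destruct (H t eps He) as [d Hd]. exists d. split. apply cond_pos.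
  intros s Hs Hne Hsd. specialize (Hd (s - t) ltac:(lra) Hsd).
  replace (t + (s - t)) with s in Hd by ring. exact Hd.
Qed.

Lemma D_eps_interior a b f f' t : D_eps a b f f' -> a < t < b -> derivable_pt_lim f t (f' t).
Proof.
  intros H Ht eps He. destruct (H t ltac:(lra) eps He) as [d [Hd Hs]].
  assert (Hp : 0 < Rmin d (Rmin (t - a) (b - t))).
  { apply Rmin_pos; auto. apply Rmin_pos; lra. }
  exists (mkposreal _ Hp). intros h Hh Hhd. simpl in Hhd.
  pose proof (Rmin_l d (Rmin (t - a) (b - t))). pose proof (Rmin_r d (Rmin (t - a) (b - t))).
  pose proof (Rmin_l (t - a) (b - t)). pose proof (Rmin_r (t - a) (b - t)).
  assert (Habs := Rabs_def2 _ _ Hhd).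
  specialize (Hs (t + h)). replace (t + h - t) with h in Hs by ring.
  apply Hs; try lra.
Qed.

Lemma end_bound a b F F' t s : D_eps a b F F' -> a <= t <= b -> forall d, 0 < d ->
  (forall s, a <= s <= b -> s <> t -> Rabs (s - t) < d -> Rabs ((F s - F t) / (s - t) - F' t) < 1) ->
  a <= s <= b -> s <> t -> Rabs (s - t) < d -> Rabs (F s - F t) <= (Rabs (F' t) + 1) * Rabs (s - t).
Proof.
  intros _ Ht d Hd H Hs Hne Hsd. specialize (H s Hs Hne Hsd).
  assert (Hst: s - t <> 0) by lra.
  replace (F s - F t) with (((F s - F t) / (s - t)) * (s - t)) by (field; auto).
  rewrite Rabs_mult. apply Rmult_le_compat_r. apply Rabs_pos.
  pose proof (Rabs_triang_inv ((F s - F t) / (s - t)) (F' t)). lra.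
Qed.

Lemma mono a b F F' : a <= b -> D_eps a b F F' -> (forall t, a <= t <= b -> 0 <= F' t) -> F a <= F b.
Proof.
  intros Hab HD Hpos. destruct (Req_dec a b) as [->|Hne]; [lra|].
  destruct (Rle_dec (F a) (F b)) as [|Hcon]; auto. exfalso.
  set (eta := F a - F b).
  destruct (HD a ltac:(lra) 1 Rlt_0_1) as [da [Hda Ha]].
  destruct (HD b ltac:(lra) 1 Rlt_0_1) as [db [Hdb Hb]].
  set (K := Rabs (F' a) + Rabs (F' b) + 1).
  assert (HK : 0 < K) by (unfold K; pose proof (Rabs_pos (F' a)); pose proof (Rabs_pos (F' b)); lra).
  set (r := Rmin (Rmin (da/2) (db/2)) (Rmin ((b-a)/3) (eta / (3*K)))).
  assert (Hr : 0 < r).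
  { unfold r. apply Rmin_pos; apply Rmin_pos; try lra. unfold eta. apply Rdiv_lt_0_compat; lra. }
  assert (r <= da/2) by (unfold r; pose proof (Rmin_l (Rmin (da/2) (db/2)) (Rmin ((b-a)/3) (eta / (3*K)))); pose proof (Rmin_l (da/2) (db/2)); lra).
  assert (r <= db/2) by (unfold r; pose proof (Rmin_l (Rmin (da/2) (db/2)) (Rmin ((b-a)/3) (eta / (3*K)))); pose proof (Rmin_r (da/2) (db/2)); lra).
  assert (r <= (b-a)/3) by (unfold r; pose proof (Rmin_r (Rmin (da/2) (db/2)) (Rmin ((b-a)/3) (eta / (3*K)))); pose proof (Rmin_l ((b-a)/3) (eta / (3*K))); lra).
  assert (Hre: r <= eta/(3*K)) by (unfold r; pose proof (Rmin_r (Rmin (da/2) (db/2)) (Rmin ((b-a)/3) (eta / (3*K)))); pose proof (Rmin_r ((b-a)/3) (eta / (3*K))); lra).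
  assert (HKr : K * r <= eta / 3).
  { apply Rmult_le_compat_l with (r := K) in Hre; [|lra].
    replace (K * (eta / (3 * K))) with (eta/3) in Hre by (field; lra). lra. }
  set (x := a + r). set (y := b - r).
  assert (E1 := end_bound a b F F' a x HD ltac:(lra) da Hda Ha ltac:(unfold x; lra) ltac:(unfold x; lra)
    ltac:(unfold x; rewrite Rabs_pos_eq; lra)).
  assert (E2 := end_bound a b F F' b y HD ltac:(lra) db Hdb Hb ltac:(unfold y; lra) ltac:(unfold y; lra)
    ltac:(unfold y; rewrite Rabs_left; lra)).
  replace (x - a) with r in E1 by (unfold x; ring).
  replace (y - b) with (- r) in E2 by (unfold y; ring).
  rewrite Rabs_Ropp, (Rabs_pos_eq r) in E2 by lra. rewrite (Rabs_pos_eq r) in E1 by lra.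
  assert ((Rabs (F' a) + 1) * r <= K * r) by (apply Rmult_le_compat_r; unfold K; pose proof (Rabs_pos (F' b)); lra).
  assert ((Rabs (F' b) + 1) * r <= K * r) by (apply Rmult_le_compat_r; unfold K; pose proof (Rabs_pos (F' a)); lra).
  assert (Hint : forall z, x < z < y -> derivable_pt_lim F z (F' z)).
  { intros z Hz. apply (D_eps_interior a b); auto. unfold x, y in Hz; lra. }
  destruct (MVT_gen F x y F') as [c [Hc Hmvt]].
  - intros z Hz. rewrite Rmin_left, Rmax_right in Hz by (unfold x, y; lra).
    apply is_derive_Reals. apply Hint; auto.
  - intros z Hz. rewrite Rmin_left, Rmax_right in Hz by (unfold x, y; lra).
    apply derivable_continuous_pt. exists (F' z). apply (D_eps_interior a b); auto.
    unfold x, y in Hz; lra.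
  - rewrite Rmin_left, Rmax_right in Hc by (unfold x, y; lra).
    assert (0 <= F' c * (y - x)).
    { apply Rmult_le_pos. apply Hpos. unfold x, y in Hc; lra. unfold x, y; lra. }
    assert (F a - F x <= K * r) by (pose proof (Rabs_Ropp (F x - F a)); pose proof (Rle_abs (-(F x - F a))); lra).
    assert (F y - F b <= K * r) by (pose proof (Rle_abs (F y - F b)); lra).
    unfold eta in *. lra.
Qed.

Lemma cos_le_dec x y : 0 <= x -> x <= y -> y <= PI -> cos y <= cos x.
Proof.
  intros. destruct (Req_dec x y) as [->|]; [lra|]. left. apply cos_decreasing_1; lra.
Qed.

Lemma sin_le_inc x y : - (PI/2) <= x -> x <= y -> y <= PI/2 -> sin x <= sin y.
Proof.
  intros. destruct (Req_dec x y) as [->|]; [lra|]. left. apply sin_increasing_1; lra.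
Qed.

Lemma PW c e s a : c * c + e * e = 1 -> cos s <= c -> 0 <= s <= 2 * a -> 0 <= a <= PI / 2 ->
  sin (a - s) <= sin a * c - cos a * e.
Proof.
  intros He Hc Hs Ha. pose proof PI_RGT_0.
  assert (Hc1 : -1 <= c <= 1) by nra.
  set (p := acos c).
  assert (Hp : 0 <= p <= PI) by apply acos_bound.
  assert (Cp : cos p = c) by (apply cos_acos; auto).
  assert (Sp : sin p = Rabs e).
  { unfold p. rewrite sin_acos by auto. replace (1 - c²) with (e * e) by (unfold Rsqr; lra).
    rewrite <- sqrt_Rsqr_abs. reflexivity. }
  assert (p <= s).
  { destruct (Rle_dec p s) as [|Hn]; auto. exfalso.
    assert (cos p < cos s) by (apply cos_decreasing_1; lra). lra. }
  assert (HH : sin (a - s) <= sin (a - p)) by (apply sin_le_inc; lra).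
  rewrite (sin_minus a p), Cp, Sp in HH.
  assert (0 <= cos a) by (apply cos_ge_0; lra).
  pose proof (Rle_abs e). nra.
Qed.

Lemma half_cone w v a : vnorm w = 1 -> 0 < a <= PI / 2 ->
  0 <= sin a * vdot v w - cos a * (snd v * fst w - fst v * snd w) ->
  0 <= sin a * vdot v w + cos a * (snd v * fst w - fst v * snd w) ->
  cone w a v.
Proof.
  intros Hw Ha H1 H2. unfold cone. pose proof PI_RGT_0.
  pose proof (vnorm_sq w) as Ew. rewrite Hw in Ew.
  pose proof (vnorm_sq v) as Ev. pose proof (vnorm_ge0 v).
  set (r := vnorm v) in *. set (X := vdot v w) in *.
  set (Y := snd v * fst w - fst v * snd w) in *.
  assert (N : r * r = X * X + Y * Y).
  { rewrite Ev. transitivity ((fst v * fst v + snd v * snd v) * (fst w * fst w + snd w * snd w)).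
    rewrite <- Ew; ring. unfold X, Y, vdot; ring. }
  assert (sa : 0 < sin a) by (apply sin_gt_0; lra).
  assert (ca : 0 <= cos a) by (apply cos_ge_0; lra).
  pose proof (sin2_cos2 a). unfold Rsqr in *.
  assert (Q : (cos a * Y) * (cos a * Y) <= (sin a * X) * (sin a * X)) by nra.
  assert (X0 : 0 <= X) by nra.
  assert (Q2 : (cos a * r) * (cos a * r) <= X * X).
  { replace ((cos a * r) * (cos a * r)) with (cos a * cos a * (X * X + Y * Y)) by (rewrite <- N; ring).
    replace (cos a * cos a) with (1 - sin a * sin a) at 1 by lra. nra. }
  nra.
Qed.

Section Geo.
Variables (gamma dgamma : R -> pt2) (L : R).
Hypothesis Hadm : admissible gamma dgamma L.

Definition C (a b : R) := vsub (gamma b) (gamma a).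

Lemma unit_d u : 0 <= u <= L -> vnorm (dgamma u) = 1.
Proof. intros Hu. destruct Hadm as (_&_&_&_&_&Hn&_). auto. Qed.

Lemma unit_dd u : 0 <= u <= L -> fst (dgamma u) * fst (dgamma u) + snd (dgamma u) * snd (dgamma u) = 1.
Proof. intros. rewrite <- vnorm_sq, unit_d; auto; ring. Qed.

Lemma proj_bound a b m1 m2 G G' : 0 <= a -> a <= b -> b <= L ->
  (forall t, derivable_pt_lim G t (G' t)) ->
  (forall u, a <= u <= b -> G' u <= m1 * fst (dgamma u) + m2 * snd (dgamma u)) ->
  G b - G a <= vdot (C a b) (m1, m2).
Proof.
  intros Ha Hab Hb HG Hp. destruct Hadm as (_&D1&D2&_).
  apply deriv_on_eps in D1. apply deriv_on_eps in D2.
  apply (D_eps_sub _ _ a b) in D1; try lra. apply (D_eps_sub _ _ a b) in D2; try lra.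
  pose proof (D_eps_lin _ _ _ _ _ _ m1 m2 D1 D2) as D3.
  pose proof (D_eps_glob a b G G' HG) as D4.
  pose proof (D_eps_lin _ _ _ _ _ _ 1 (-1) D3 D4) as D5.
  pose proof (mono a b _ _ Hab D5) as M. simpl in M.
  assert (M' := M ltac:(intros t Ht; specialize (Hp t Ht); lra)).
  unfold C, vdot, vsub; simpl. lra.
Qed.

Lemma tan_dot u v : 0 <= u -> u <= v -> v <= L -> v - u <= PI -> cos (v - u) <= vdot (dgamma u) (dgamma v).
Proof.
  intros Hu Huv Hv Hpi. pose proof PI_RGT_0.
  destruct (Req_dec u v) as [<-|Hne].
  { replace (u - u) with 0 by ring. rewrite cos_0. unfold vdot. rewrite unit_dd; lra. }
  pose proof (cs_abs (dgamma u) (dgamma v)) as Hcs. rewrite !unit_d in Hcs by lra.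
  apply Rabs_def2b in Hcs || idtac.
  assert (Hb : -1 <= vdot (dgamma u) (dgamma v) <= 1).
  { pose proof (Rle_abs (vdot (dgamma u) (dgamma v))).
    pose proof (Rle_abs (- vdot (dgamma u) (dgamma v))). rewrite Rabs_Ropp in H1. lra. }
  destruct (Req_dec (v - u) PI) as [Heq|Hlt].
  { rewrite Heq, cos_PI. lra. }
  destruct Hadm as (_&_&_&_&_&_&Hc).
  specialize (Hc u v Hu Hv ltac:(lra) ltac:(lra)).
  unfold vangle in Hc. rewrite !unit_d in Hc by lra.
  replace (vdot (dgamma v) (dgamma u) / (1 * 1)) with (vdot (dgamma u) (dgamma v)) in Hc
    by (unfold vdot; field).
  rewrite <- (cos_acos (vdot (dgamma u) (dgamma v))) by auto.
  apply cos_le_dec; auto. apply acos_bound.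
Qed.

Lemma chord_len a b : 0 <= a -> a < b -> b <= L -> b - a <= PI -> 2 * sin ((b - a) / 2) <= vnorm (C a b).
Proof.
  intros Ha Hab Hb Hpi. pose proof PI_RGT_0.
  set (c := (a + b) / 2).
  pose proof (proj_bound a b (fst (dgamma c)) (snd (dgamma c)) (fun u => sin (u - c)) (fun u => cos (u - c))
    Ha ltac:(lra) Hb) as P.
  simpl in P.
  assert (P' : sin (b - c) - sin (a - c) <= vdot (C a b) (dgamma c)).
  { rewrite <- surjective_pairing in P. apply P.
    - intros t. apply is_derive_Reals. auto_derive; [easy|]. unfold Rminus; ring.
    - intros u Hu. destruct (Rle_dec u c).
      + rewrite <- cos_neg. replace (- (u - c)) with (c - u) by ring.
        pose proof (tan_dot u c ltac:(lra) ltac:(lra) ltac:(unfold c; lra) ltac:(unfold c; lra)).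
        unfold vdot in H0. lra.
      + pose proof (tan_dot c u ltac:(unfold c; lra) ltac:(lra) ltac:(lra) ltac:(unfold c; lra)).
        unfold vdot in H0. lra. }
  replace (b - c) with ((b - a) / 2) in P' by (unfold c; field).
  replace (a - c) with (- ((b - a) / 2)) in P' by (unfold c; field).
  rewrite sin_neg in P'.
  pose proof (cs (C a b) (dgamma c)). rewrite unit_d in H0 by (unfold c; lra). lra.
Qed.

Lemma cone_gen a b w al G G' : 0 <= a -> a <= b -> b <= L -> vnorm w = 1 -> 0 < al <= PI / 2 ->
  (forall t, derivable_pt_lim G t (G' t)) -> G b - G a = 0 ->
  (forall u, a <= u <= b -> exists s, 0 <= s <= 2 * al /\ cos s <= vdot (dgamma u) w /\ G' u = sin (al - s)) ->
  cone w al (C a b).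
Proof.
  intros Ha Hab Hb Hw Hal HG HGab Hp.
  pose proof (vnorm_sq w) as Ew. rewrite Hw in Ew.
  assert (K : forall sg, sg * sg = 1 ->
     0 <= sin al * vdot (C a b) w - sg * (cos al * (snd (C a b) * fst w - fst (C a b) * snd w))).
  { intros sg Hsg.
    pose proof (proj_bound a b (sin al * fst w + sg * cos al * snd w) (sin al * snd w - sg * cos al * fst w)
       G G' Ha Hab Hb HG) as P.
    assert (P' : G b - G a <= vdot (C a b) (sin al * fst w + sg * cos al * snd w, sin al * snd w - sg * cos al * fst w)).
    { apply P. intros u Hu. destruct (Hp u Hu) as [s [Hs [Hc HG']]]. rewrite HG'.
      pose proof (unit_dd u ltac:(lra)).
      pose proof (PW (vdot (dgamma u) w) (sg * (snd (dgamma u) * fst w - fst (dgamma u) * snd w)) s al) as Q.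
      unfold vdot in *.
      assert (E : (fst (dgamma u) * fst w + snd (dgamma u) * snd w) * (fst (dgamma u) * fst w + snd (dgamma u) * snd w) +
         sg * (snd (dgamma u) * fst w - fst (dgamma u) * snd w) * (sg * (snd (dgamma u) * fst w - fst (dgamma u) * snd w)) = 1).
      { transitivity ((fst (dgamma u) * fst (dgamma u) + snd (dgamma u) * snd (dgamma u)) * (fst w * fst w + snd w * snd w) * 1).
        2: { rewrite H, <- Ew. ring. }
        replace (sg * (snd (dgamma u) * fst w - fst (dgamma u) * snd w) * (sg * (snd (dgamma u) * fst w - fst (dgamma u) * snd w)))
          with ((sg * sg) * ((snd (dgamma u) * fst w - fst (dgamma u) * snd w) * (snd (dgamma u) * fst w - fst (dgamma u) * snd w))) by ring.
        rewrite Hsg. ring. }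
      specialize (Q E Hc Hs ltac:(lra)). lra. }
    rewrite HGab in P'. unfold vdot in *; simpl in *. lra. }
  apply half_cone; auto.
  - pose proof (K 1 ltac:(ring)). lra.
  - pose proof (K (-1) ltac:(ring)). lra.
Qed.

Lemma cone_end a b : 0 <= a -> a < b -> b <= L -> b - a <= PI -> cone (dgamma b) ((b - a) / 2) (C a b).
Proof.
  intros Ha Hab Hb Hpi. pose proof PI_RGT_0. set (al := (b - a) / 2).
  apply (cone_gen a b (dgamma b) al (fun u => - cos ((al - b) + u)) (fun u => sin ((al - b) + u))); auto; try lra.
  - apply unit_d; lra.
  - unfold al; split; lra.
  - intros t. apply is_derive_Reals. auto_derive; [easy|]. unfold Rminus; ring.
  - replace (al - b + b) with al by ring. replace (al - b + a) with (- al) by (unfold al; field).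
    rewrite cos_neg. ring.
  - intros u Hu. exists (b - u). split; [unfold al; lra|]. split.
    + apply tan_dot; lra.
    + f_equal; ring.
Qed.

Lemma cone_start a b : 0 <= a -> a < b -> b <= L -> b - a <= PI -> cone (dgamma a) ((b - a) / 2) (C a b).
Proof.
  intros Ha Hab Hb Hpi. pose proof PI_RGT_0. set (al := (b - a) / 2).
  apply (cone_gen a b (dgamma a) al (fun u => cos ((al + a) - u)) (fun u => sin ((al + a) - u))); auto; try lra.
  - apply unit_d; lra.
  - unfold al; split; lra.
  - intros t. apply is_derive_Reals. auto_derive; [easy|]. unfold Rminus; ring.
  - replace (al + a - a) with al by ring. replace (al + a - b) with (- al) by (unfold al; field).
    rewrite cos_neg. ring.
  - intros u Hu. exists (u - a). split; [unfold al; lra|]. split.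
    + unfold vdot. rewrite (Rmult_comm (fst (dgamma u))), (Rmult_comm (snd (dgamma u))).
      apply tan_dot; lra.
    + f_equal; ring.
Qed.

Lemma cone_tan a b : 0 <= a -> a <= b -> b <= L -> b - a <= PI -> cone (dgamma b) (b - a) (dgamma a).
Proof.
  intros. unfold cone. rewrite unit_d by lra. rewrite Rmult_1_r. apply tan_dot; lra.
Qed.

Lemma cone_tan' a b : 0 <= a -> a <= b -> b <= L -> b - a <= PI -> cone (dgamma a) (b - a) (dgamma b).
Proof.
  intros. unfold cone. rewrite unit_d by lra. rewrite Rmult_1_r.
  unfold vdot. rewrite (Rmult_comm (fst (dgamma b))), (Rmult_comm (snd (dgamma b))). apply tan_dot; lra.
Qed.

End Geo.

Definition good (T : list R) (th L : R) : Prop :=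
  let tt i := nth i T 0 in let k := pred (length T) in
  (1 <= k)%nat /\ tt 0%nat = 0 /\ tt k = L /\
  (forall i, (i < k)%nat -> 0 < tt (S i) - tt i <= th) /\
  (forall i, (0 < i)%nat -> (S i < k)%nat -> tt (S i) - tt i = th) /\
  (forall i, (S i < k)%nat -> tt (S i) - tt i = th \/ tt (S (S i)) - tt (S i) = th) /\
  (tt 1%nat - tt 0%nat = th \/ tt 1%nat - tt 0%nat <= th / 2) /\
  (tt k - tt (pred k) = th \/ tt k - tt (pred k) <= th / 2).

Lemma nth_map_seq (f : nat -> R) n i d : (i < n)%nat -> nth i (map f (seq 0 n)) d = f i.
Proof.
  intros H. rewrite (nth_indep _ d (f 0%nat)) by (rewrite length_map, length_seq; auto).
  rewrite map_nth, seq_nth; auto.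
Qed.

Lemma disc_good L th : 0 < th -> th < L -> good (disc_times L th) th L.
Proof.
  intros Hth HL. unfold disc_times.
  set (z := Int_part (L / th)).
  destruct (base_Int_part (L / th)) as [Z1 Z2]. fold z in Z1, Z2.
  assert (Hq : 1 < L / th) by (apply Rmult_lt_reg_r with th; auto; unfold Rdiv; rewrite Rmult_assoc, Rinv_l; lra).
  assert (Hz : (0 < z)%Z) by (apply lt_IZR; lra).
  set (m := Z.to_nat z).
  assert (Hm : INR m = IZR z) by (unfold m; rewrite INR_IZR_INZ, Z2Nat.id; auto; lia).
  assert (Hm1 : (1 <= m)%nat) by (unfold m; lia).
  assert (B1 : INR m * th <= L).
  { rewrite Hm. apply Rmult_le_reg_r with (/ th). apply Rinv_0_lt_compat; auto.
    rewrite Rmult_assoc, Rinv_r by lra. rewrite Rmult_1_r. auto. }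
  assert (B2 : L < INR m * th + th).
  { rewrite Hm. apply Rmult_lt_reg_r with (/ th). apply Rinv_0_lt_compat; auto.
    replace ((IZR z * th + th) * / th) with (IZR z + 1) by (field; lra). unfold Rdiv in Z2. lra. }
  fold m.
  destruct (Req_dec_T (L - INR m * th) 0) as [E|E].
  - set (f := fun i => INR i * th).
    assert (Ht : forall i, (i <= m)%nat -> nth i (map f (seq 0 (m + 1))) 0 = f i)
      by (intros; apply nth_map_seq; lia).
    unfold good. rewrite length_map, length_seq. replace (pred (m + 1)) with m by lia.
    assert (Hf : forall i, f (S i) - f i = th) by (intros; unfold f; rewrite S_INR; ring).
    split; [auto|]. split. { rewrite Ht by lia. unfold f; simpl; ring. }
    split. { rewrite Ht by lia. unfold f. lra. }
    split. { intros i Hi. rewrite !Ht by lia. rewrite Hf. lra. }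
    split. { intros i _ Hi. rewrite !Ht by lia. apply Hf. }
    split. { intros i Hi. left. rewrite !Ht by lia. apply Hf. }
    split. { left. rewrite !Ht by lia. apply Hf. }
    left. replace m with (S (pred m)) at 1 by lia. rewrite !Ht by lia. apply Hf.
  - set (dl := L - INR m * th) in *.
    assert (Hd : 0 < dl) by (assert (0 <= dl) by (unfold dl; lra); destruct (Rle_lt_or_eq_dec 0 dl H); [auto|subst; congruence]).
    assert (Hd2 : dl < th) by (unfold dl; lra).
    set (f := fun i => dl / 2 + INR i * th).
    set (T := 0 :: map f (seq 0 (m + 1)) ++ [L]).
    assert (Ht : forall i, (i <= m)%nat -> nth (S i) T 0 = f i).
    { intros i Hi. unfold T. simpl. rewrite app_nth1 by (rewrite length_map, length_seq; lia).
      apply nth_map_seq; lia. }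
    assert (Hl : nth (m + 2) T 0 = L).
    { unfold T. replace (m + 2)%nat with (S (m + 1)) by lia. simpl.
      rewrite app_nth2 by (rewrite length_map, length_seq; lia).
      rewrite length_map, length_seq. replace (m + 1 - (m + 1))%nat with 0%nat by lia. reflexivity. }
    assert (H0 : nth 0 T 0 = 0) by reflexivity.
    assert (Hlen : length T = (m + 3)%nat).
    { unfold T. simpl. rewrite length_app, length_map, length_seq. simpl. lia. }
    assert (Hf : forall i, f (S i) - f i = th) by (intros; unfold f; rewrite S_INR; ring).
    assert (Hfm : L - f m = dl / 2) by (unfold f, dl; cbv beta; field).
    assert (Hf0 : f 0%nat - 0 = dl / 2) by (unfold f; cbv beta; rewrite INR_0; field).
    fold T. unfold good. rewrite Hlen. replace (pred (m + 3)) with (m + 2)%nat by lia.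
    split; [lia|]. split; [auto|]. split; [auto|].
    split.
    { intros i Hi. destruct i as [|i]. rewrite Ht by lia. rewrite H0. lra.
      destruct (Nat.eq_dec i m) as [->|Hne].
      - replace (S (S m)) with (m + 2)%nat by lia. rewrite Hl, Ht by lia. lra.
      - rewrite !Ht by lia. rewrite Hf. lra. }
    split.
    { intros i Hi1 Hi2. destruct i as [|i]; [lia|]. rewrite !Ht by lia. apply Hf. }
    split.
    { intros i Hi. destruct i as [|i].
      - right. rewrite !Ht by lia. apply Hf.
      - left. rewrite !Ht by lia. apply Hf. }
    split.
    { right. rewrite Ht by lia. rewrite H0. lra. }
    right. replace (pred (m + 2)) with (S m) by lia. rewrite Ht by lia. rewrite Hl. lra.
Qed.

Lemma last_nth {A} (l : list A) d : l <> [] -> last l d = nth (pred (length l)) l d.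
Proof.
  induction l as [|a l IH]; intros H; [congruence|].
  destruct l as [|b l]; [reflexivity|].
  change (last (a :: b :: l) d) with (last (b :: l) d). rewrite IH by congruence.
  reflexivity.
Qed.

Lemma vtx_map (gamma : R -> pt2) T i : (i < length T)%nat -> vtx (map gamma T) i = gamma (nth i T 0).
Proof.
  intros H. unfold vtx. rewrite (nth_indep _ (0, 0) (gamma 0)) by (rewrite length_map; auto).
  apply map_nth.
Qed.

Lemma edge_map (gamma : R -> pt2) T i : (S i < length T)%nat ->
  edge (map gamma T) i = vsub (gamma (nth (S i) T 0)) (gamma (nth i T 0)).
Proof. intros H. unfold edge. rewrite !vtx_map by lia. reflexivity. Qed.

Lemma edge_cons x p i : edge (x :: p) (S i) = edge p i.
Proof. reflexivity. Qed.

Lemma vtx_app1 p z i : (i < length p)%nat -> vtx (p ++ [z]) i = vtx p i.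
Proof. intros. unfold vtx. apply app_nth1; auto. Qed.

Lemma vtx_app2 p z : vtx (p ++ [z]) (length p) = z.
Proof. unfold vtx. rewrite app_nth2 by lia. rewrite Nat.sub_diag. reflexivity. Qed.

Lemma edge_app1 p z i : (S i < length p)%nat -> edge (p ++ [z]) i = edge p i.
Proof. intros. unfold edge. rewrite !vtx_app1 by lia. reflexivity. Qed.

Lemma vsub_vsub x U : vsub x (vsub x U) = U.
Proof. destruct x, U. unfold vsub; simpl. f_equal; ring. Qed.

Lemma vsub_vadd x V : vsub (vadd x V) x = V.
Proof. destruct x, V. unfold vsub, vadd; simpl. f_equal; ring. Qed.

Lemma good_range T th L : good T th L -> forall i, (i <= pred (length T))%nat ->
  0 <= nth i T 0 <= L.
Proof.
  intros (Hk&H0&HL&H2&_) i Hi. set (k := pred (length T)) in *.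
  assert (A : forall i, (i <= k)%nat -> 0 <= nth i T 0).
  { induction i0 as [|i0 IH]; intros Hi0. lra. specialize (H2 i0 ltac:(lia)). specialize (IH ltac:(lia)). lra. }
  assert (B : forall j, (j <= k)%nat -> nth (k - j) T 0 <= L).
  { induction j as [|j IH]; intros Hj. rewrite Nat.sub_0_r. lra.
    specialize (H2 (k - S j)%nat ltac:(lia)). replace (S (k - S j)) with (k - j)%nat in H2 by lia.
    specialize (IH ltac:(lia)). lra. }
  split. apply A; auto. replace i with (k - (k - i))%nat by lia. apply B. lia.
Qed.

Lemma main_gen (gamma : R -> pt2) (L th l : R) (T : list R) (U V : pt2) :
  good T th L -> 0 < th ->
  (forall a b c, 0 <= a -> a < b -> b < c -> c <= L -> b - a <= th -> c - b <= th ->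
     vangle (vsub (gamma b) (gamma a)) (vsub (gamma c) (gamma b)) <= th) ->
  (forall a b, 0 <= a -> b <= L -> b - a = th -> ~ short l (vsub (gamma b) (gamma a))) ->
  (forall b, 0 < b -> b <= th -> b <= L -> vangle U (vsub (gamma b) (gamma 0)) <= th) ->
  (forall a b, 0 < a -> a <= th / 2 -> a < b -> b - a <= th -> b <= L ->
     vangle U (vsub (gamma b) (gamma a)) <= th) ->
  (forall a, 0 <= a -> a < L -> L - a <= th -> vangle (vsub (gamma L) (gamma a)) V <= th) ->
  (forall a b, 0 <= a -> a < b -> b - a <= th -> b < L -> L - b <= th / 2 ->
     vangle (vsub (gamma b) (gamma a)) V <= th) ->
  ~ short l U -> ~ short l V ->
  dccp th l (map gamma T) /\ starts_at th l (map gamma T) (gamma 0) U /\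
  ends_at th l (map gamma T) (gamma L) V.
Proof.
  intros Hg Hth Tturn Tlong Tst1 Tst2 Ten1 Ten2 HU HV.
  pose proof (good_range _ _ _ Hg) as Rg.
  destruct Hg as (Hk&H0&HL&H2&H3&H4&H5&H6).
  set (k := pred (length T)) in *.
  set (p := map gamma T).
  assert (Hlen : length p = S k) by (unfold p, k; rewrite length_map; lia).
  assert (Ep : forall i, (i < k)%nat -> edge p i = vsub (gamma (nth (S i) T 0)) (gamma (nth i T 0))).
  { intros i Hi. unfold p. apply edge_map. unfold k in Hi. lia. }
  assert (Dp : dccp th l p).
  { split; [|split].
    - intros i Hi. rewrite Hlen in Hi. rewrite !Ep by lia.
      destruct (Rg i ltac:(lia)). destruct (Rg (S (S i)) ltac:(lia)).
      pose proof (H2 i ltac:(lia)). pose proof (H2 (S i) ltac:(lia)).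
      apply Tturn; lra.
    - intros i Hi [S1 S2]. rewrite Hlen in Hi. rewrite !Ep in * by lia.
      destruct (Rg i ltac:(lia)). destruct (Rg (S (S i)) ltac:(lia)).
      destruct (Rg (S i) ltac:(lia)).
      destruct (H4 i ltac:(lia)) as [E|E].
      + apply (Tlong (nth i T 0) (nth (S i) T 0)); auto; lra.
      + apply (Tlong (nth (S i) T 0) (nth (S (S i)) T 0)); auto; lra.
    - intros i Hi Hs _. exfalso. rewrite Hlen in Hi. rewrite Ep in Hs by lia.
      destruct (Rg (S i) ltac:(lia)). destruct (Rg (S (S i)) ltac:(lia)).
      pose proof (H3 (S i) ltac:(lia) ltac:(lia)).
      apply (Tlong (nth (S i) T 0) (nth (S (S i)) T 0)); auto; lra. }
  assert (V0 : vtx p 0 = gamma 0).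
  { unfold p. rewrite vtx_map by (unfold k in *; lia). rewrite H0. reflexivity. }
  assert (Vk : vtx p k = gamma L).
  { unfold p. rewrite vtx_map by (unfold k in *; lia). rewrite HL. reflexivity. }
  split; [exact Dp|split].
  -
    split.
    { unfold p. destruct T as [|t0 T']; [simpl in Hk; unfold k in Hk; simpl in Hk; lia|].
      simpl. simpl in H0. rewrite H0. reflexivity. }
    set (q := vsub (gamma 0) U :: p).
    assert (Q0 : edge q 0 = U).
    { unfold q, edge. unfold vtx at 1. simpl. fold (vtx p 0). rewrite V0. apply vsub_vsub. }
    destruct Dp as (D1&D2&D3).
    assert (Hlq : length q = S (S k)) by (unfold q; simpl; lia).
    split; [|split].
    + intros i Hi. rewrite Hlq in Hi. destruct i as [|i].
      * rewrite Q0. unfold q. rewrite edge_cons. rewrite Ep by lia.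
        destruct (Rg 1%nat ltac:(lia)). pose proof (H2 0%nat ltac:(lia)).
        rewrite H0 in *. apply Tst1; lra.
      * unfold q. rewrite !edge_cons. apply D1. lia.
    + intros i Hi. rewrite Hlq in Hi. destruct i as [|i].
      * rewrite Q0. tauto.
      * unfold q. rewrite !edge_cons. apply D2. lia.
    + intros i Hi Hs Hinf. rewrite Hlq in Hi. destruct i as [|i].
      * rewrite Q0. unfold q in *. rewrite edge_cons in *. rewrite Ep in * by lia.
        destruct (Rg 1%nat ltac:(lia)). destruct (Rg 2%nat ltac:(lia)).
        pose proof (H2 0%nat ltac:(lia)). pose proof (H2 1%nat ltac:(lia)).
        rewrite H0 in *.
        destruct H5 as [E|E].
        { exfalso. apply (Tlong 0 (nth 1%nat T 0)); auto; try lra. }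
        apply Tst2; lra.
      * unfold q in *. rewrite !edge_cons in *. exfalso.
        rewrite Ep in Hs by lia.
        destruct (Rg (S i) ltac:(lia)). destruct (Rg (S (S i)) ltac:(lia)).
        pose proof (H3 (S i) ltac:(lia) ltac:(lia)).
        apply (Tlong (nth (S i) T 0) (nth (S (S i)) T 0)); auto; lra.
  -
    split; [|split].
    { rewrite last_nth. rewrite Hlen. simpl. exact Vk.
      intro E. rewrite E in Hlen. simpl in Hlen. lia. }
    { intro E. rewrite E in Hlen. simpl in Hlen. lia. }
    set (q := p ++ [vadd (gamma L) V]).
    assert (Qk : edge q k = V).
    { unfold q, edge. rewrite (vtx_app1 p _ k) by lia. rewrite <- Hlen. rewrite vtx_app2.
      rewrite Vk. apply vsub_vadd. }
    assert (Qe : forall i, (S i < S k)%nat -> edge q i = edge p i).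
    { intros i Hi. unfold q. apply edge_app1. lia. }
    destruct Dp as (D1&D2&D3).
    assert (Hlq : length q = S (S k)) by (unfold q; rewrite length_app, Hlen; simpl; lia).
    destruct k as [|j]; [lia|].
    split; [|split].
    + intros i Hi. rewrite Hlq in Hi.
      destruct (Nat.eq_dec i j) as [->|Hne].
      * rewrite Qe by lia. rewrite Qk. rewrite Ep by lia.
        destruct (Rg j ltac:(lia)). pose proof (H2 j ltac:(lia)). simpl pred in *.
        rewrite HL in *. apply Ten1; lra.
      * rewrite !Qe by lia. apply D1. lia.
    + intros i Hi. rewrite Hlq in Hi.
      destruct (Nat.eq_dec i j) as [->|Hne].
      * rewrite Qk. tauto.
      * rewrite !Qe by lia. apply D2. lia.
    + intros i Hi Hs Hinf. rewrite Hlq in Hi.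
      destruct (Nat.eq_dec (S i) j) as [Heq|Hne].
      * subst j. rewrite Qk. rewrite Qe in * by lia. rewrite Ep in * by lia.
        destruct (Rg i ltac:(lia)). destruct (Rg (S i) ltac:(lia)).
        pose proof (H2 i ltac:(lia)). pose proof (H2 (S i) ltac:(lia)).
        simpl pred in *. fold (nth (S (S i)) T 0) in *. rewrite HL in *.
        destruct H6 as [E|E].
        { exfalso. apply (Tlong (nth (S i) T 0) L); auto; lra. }
        apply Ten2; lra.
      * exfalso. rewrite !Qe in * by lia. rewrite Ep in Hs by lia.
        destruct (Rg (S i) ltac:(lia)). destruct (Rg (S (S i)) ltac:(lia)).
        pose proof (H3 (S i) ltac:(lia) ltac:(lia)).
        apply (Tlong (nth (S i) T 0) (nth (S (S i)) T 0)); auto; lra.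
Qed.

Lemma vnorm_scale l u : 0 <= l -> vnorm (vscale l u) = l * vnorm u.
Proof.
  intros Hl. unfold vnorm, vdot, vscale; simpl.
  replace (l * fst u * (l * fst u) + l * snd u * (l * snd u)) with ((l * l) * (fst u * fst u + snd u * snd u)) by ring.
  rewrite sqrt_mult by nra. rewrite sqrt_square by lra. reflexivity.
Qed.

Lemma vangle_scale_l l u v : 0 < l -> 0 < vnorm u -> 0 < vnorm v -> vangle (vscale l u) v = vangle u v.
Proof.
  intros. unfold vangle. rewrite vnorm_scale by lra. f_equal.
  replace (vdot (vscale l u) v) with (l * vdot u v) by (unfold vdot, vscale; simpl; ring).
  field. split; lra.
Qed.

Lemma vangle_scale_r l u v : 0 < l -> 0 < vnorm u -> 0 < vnorm v -> vangle u (vscale l v) = vangle u v.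
Proof.
  intros. unfold vangle. rewrite vnorm_scale by lra. f_equal.
  replace (vdot u (vscale l v)) with (l * vdot u v) by (unfold vdot, vscale; simpl; ring).
  field. split; lra.
Qed.

Lemma vdot_comm u v : vdot u v = vdot v u.
Proof. unfold vdot; ring. Qed.

Lemma ang_from u v g th : 0 < vnorm u -> 0 < vnorm v -> 0 <= g -> g <= th -> th <= PI ->
  cos g * vnorm u * vnorm v <= vdot u v -> vangle u v <= th.
Proof.
  intros Hu Hv Hg Hgt Ht H. apply vangle_le; auto; try lra.
  assert (cos th <= cos g) by (apply cos_le_dec; lra).
  assert (cos th * vnorm u * vnorm v <= cos g * vnorm u * vnorm v).
  { apply Rmult_le_compat_r; [lra|]. apply Rmult_le_compat_r; lra. }
  lra.
Qed.

Section Edges.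
Variables (gamma dgamma : R -> pt2) (L th : R).
Hypothesis Hadm : admissible gamma dgamma L.
Hypothesis Hth : 0 < th <= PI.

Lemma chord_pos a b : 0 <= a -> a < b -> b <= L -> b - a <= PI -> 0 < vnorm (C gamma a b).
Proof.
  intros. pose proof (chord_len _ _ _ Hadm a b H H0 H1 H2). pose proof PI_RGT_0.
  assert (0 < sin ((b - a) / 2)) by (apply sin_gt_0; lra). lra.
Qed.

Lemma cone_self u : 0 <= u <= L -> cone (dgamma u) 0 (dgamma u).
Proof.
  intros. unfold cone. rewrite cos_0, (unit_d _ _ _ Hadm) by lra.
  unfold vdot. rewrite (unit_dd _ _ _ Hadm) by lra. lra.
Qed.

Lemma E_turn a b c : 0 <= a -> a < b -> b < c -> c <= L -> b - a <= th -> c - b <= th ->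
  vangle (C gamma a b) (C gamma b c) <= th.
Proof.
  intros. pose proof PI_RGT_0. destruct Hth as [Ht1 Ht2].
  pose proof (cone_end _ _ _ Hadm a b ltac:(lra) ltac:(lra) ltac:(lra) ltac:(lra)) as K1.
  pose proof (cone_start _ _ _ Hadm b c ltac:(lra) ltac:(lra) ltac:(lra) ltac:(lra)) as K2.
  pose proof (fun H1 H2 => cone_tri _ _ _ _ _ (unit_d _ _ _ Hadm b ltac:(split; lra)) H1 H2 K1 K2) as K. specialize (K ltac:(split; lra) ltac:(split; lra)).
  apply (ang_from _ _ ((b - a) / 2 + (c - b) / 2)); try lra.
  apply chord_pos; lra. apply chord_pos; lra.
Qed.

Lemma E_long a b : 0 <= a -> b <= L -> b - a = th -> ~ short (2 * sin (th / 2)) (C gamma a b).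
Proof.
  intros. unfold short. pose proof (chord_len _ _ _ Hadm a b H ltac:(lra) H0 ltac:(lra)).
  rewrite H1 in H2. lra.
Qed.

Lemma E_st1 l b : 0 < l -> 0 < b -> b <= th -> b <= L -> vangle (vscale l (dgamma 0)) (C gamma 0 b) <= th.
Proof.
  intros. pose proof PI_RGT_0. destruct Hth as [Ht1 Ht2].
  assert (U1 : vnorm (dgamma 0) = 1) by (apply (unit_d _ _ _ Hadm); lra).
  rewrite vangle_scale_l; auto; [|lra|apply chord_pos; lra].
  pose proof (cone_start _ _ _ Hadm 0 b ltac:(lra) ltac:(lra) ltac:(lra) ltac:(lra)) as K2.
  pose proof (fun H1 H2 => cone_tri _ _ _ _ _ U1 H1 H2 (cone_self 0 ltac:(split; lra)) K2) as K. specialize (K ltac:(split; lra) ltac:(split; lra)).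
  apply (ang_from _ _ (0 + (b - 0) / 2)); try lra. apply chord_pos; lra.
Qed.

Lemma E_st2 l a b : 0 < l -> 0 < a -> a <= th / 2 -> a < b -> b - a <= th -> b <= L ->
  vangle (vscale l (dgamma 0)) (C gamma a b) <= th.
Proof.
  intros. pose proof PI_RGT_0. destruct Hth as [Ht1 Ht2].
  assert (U1 : vnorm (dgamma 0) = 1) by (apply (unit_d _ _ _ Hadm); lra).
  rewrite vangle_scale_l; auto; [|lra|apply chord_pos; lra].
  pose proof (cone_start _ _ _ Hadm a b ltac:(lra) ltac:(lra) ltac:(lra) ltac:(lra)) as K2.
  pose proof (cone_tan _ _ _ Hadm 0 a ltac:(lra) ltac:(lra) ltac:(lra) ltac:(lra)) as K1.
  pose proof (fun H1 H2 => cone_tri _ _ _ _ _ (unit_d _ _ _ Hadm a ltac:(split; lra)) H1 H2 K1 K2) as K. specialize (K ltac:(split; lra) ltac:(split; lra)).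
  apply (ang_from _ _ ((a - 0) + (b - a) / 2)); try lra. apply chord_pos; lra.
Qed.

Lemma E_en1 l a : 0 < l -> 0 <= a -> a < L -> L - a <= th -> vangle (C gamma a L) (vscale l (dgamma L)) <= th.
Proof.
  intros. pose proof PI_RGT_0. destruct Hth as [Ht1 Ht2].
  assert (U1 : vnorm (dgamma L) = 1) by (apply (unit_d _ _ _ Hadm); lra).
  rewrite vangle_scale_r; auto; [|apply chord_pos; lra|lra].
  pose proof (cone_end _ _ _ Hadm a L ltac:(lra) ltac:(lra) ltac:(lra) ltac:(lra)) as K1.
  pose proof (fun H1 H2 => cone_tri _ _ _ _ _ U1 H1 H2 K1 (cone_self L ltac:(split; lra))) as K. specialize (K ltac:(split; lra) ltac:(split; lra)).
  apply (ang_from _ _ ((L - a) / 2 + 0)); try lra. apply chord_pos; lra.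
Qed.

Lemma E_en2 l a b : 0 < l -> 0 <= a -> a < b -> b - a <= th -> b < L -> L - b <= th / 2 ->
  vangle (C gamma a b) (vscale l (dgamma L)) <= th.
Proof.
  intros. pose proof PI_RGT_0. destruct Hth as [Ht1 Ht2].
  assert (U1 : vnorm (dgamma L) = 1) by (apply (unit_d _ _ _ Hadm); lra).
  rewrite vangle_scale_r; auto; [|apply chord_pos; lra|lra].
  pose proof (cone_end _ _ _ Hadm a b ltac:(lra) ltac:(lra) ltac:(lra) ltac:(lra)) as K1.
  pose proof (cone_tan' _ _ _ Hadm b L ltac:(lra) ltac:(lra) ltac:(lra) ltac:(lra)) as K2.
  pose proof (fun H1 H2 => cone_tri _ _ _ _ _ (unit_d _ _ _ Hadm b ltac:(split; lra)) H1 H2 K1 K2) as K. specialize (K ltac:(split; lra) ltac:(split; lra)).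
  apply (ang_from _ _ ((b - a) / 2 + (L - b))); try lra. apply chord_pos; lra.
Qed.

End Edges.

Theorem lemma17 (gamma dgamma : R -> pt2) (L : R) (n : nat) :
  admissible gamma dgamma L ->
  (1 <= n)%nat ->
  2 * PI / INR n < L ->
  dccp (2 * PI / INR n) (2 * sin (PI / INR n))
    (discretization gamma L (2 * PI / INR n)) /\
  starts_at (2 * PI / INR n) (2 * sin (PI / INR n))
    (discretization gamma L (2 * PI / INR n))
    (gamma 0) (vscale (2 * sin (PI / INR n)) (dgamma 0)) /\
  ends_at (2 * PI / INR n) (2 * sin (PI / INR n))
    (discretization gamma L (2 * PI / INR n))
    (gamma L) (vscale (2 * sin (PI / INR n)) (dgamma L)).
Proof.
  intros Hadm Hn HL. pose proof PI_RGT_0.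
  assert (Hn1 : 1 <= INR n) by (apply (le_INR 1); auto).
  set (th := 2 * PI / INR n) in *.
  assert (Hth : 0 < th) by (unfold th; apply Rdiv_lt_0_compat; lra).
  pose proof (disc_good L th Hth HL) as G.
  unfold discretization.
  assert (Hu0 : vnorm (dgamma 0) = 1) by (apply (unit_d _ _ _ Hadm); lra).
  assert (HuL : vnorm (dgamma L) = 1) by (apply (unit_d _ _ _ Hadm); lra).
  destruct (Nat.eq_dec n 1) as [->|Hn2].
  - replace (2 * sin (PI / INR 1)) with 0 by (simpl; rewrite Rdiv_1_r, sin_PI; ring).
    assert (th = 2 * PI) by (unfold th; simpl; field).
    assert (NS : forall e, ~ short 0 e) by (intros e; unfold short; pose proof (vnorm_ge0 e); lra).
    assert (AB : forall u v, vangle u v <= th) by (intros; unfold vangle; pose proof (acos_bound (vdot u v / (vnorm u * vnorm v))); lra).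
    apply main_gen; auto.
  - assert (Hn2' : 2 <= INR n) by (apply (le_INR 2); lia).
    assert (Hthp : th <= PI).
    { unfold th. apply Rmult_le_reg_r with (INR n); [lra|]. unfold Rdiv. rewrite Rmult_assoc, Rinv_l by lra. nra. }
    assert (El : 2 * sin (PI / INR n) = 2 * sin (th / 2)) by (unfold th; f_equal; f_equal; field; lra).
    rewrite El.
    assert (Hl : 0 < 2 * sin (th / 2)).
    { assert (0 < sin (th / 2)) by (apply sin_gt_0; lra). lra. }
    apply main_gen; auto.
    + intros. apply (E_turn gamma dgamma L th Hadm ltac:(lra)); auto.
    + intros. apply (E_long gamma dgamma L th Hadm ltac:(lra)); auto.
    + intros. apply (E_st1 gamma dgamma L th Hadm ltac:(lra)); auto.
    + intros. apply (E_st2 gamma dgamma L th Hadm ltac:(lra)); auto.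
    + intros. apply (E_en1 gamma dgamma L th Hadm ltac:(lra)); auto.
    + intros. apply (E_en2 gamma dgamma L th Hadm ltac:(lra)); auto.
    + unfold short. rewrite vnorm_scale, Hu0 by lra. lra.
    + unfold short. rewrite vnorm_scale, HuL by lra. lra.
Qed.
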